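(* There is an absolute constant $c>0$ such that the following holds. Let $\epsilon\in(0,1)$ and let $A\in\mathbb{R}^{n\times n}$ be symmetric PSD with $\max_{i,j}|A_{ij}|\le1$ and largest eigenvalue $\lambda_1$. Include each index $i\in[n]$ independently with probability $p=\min(1,\frac{c}{\epsilon n})$ and let $T$ be the set of included indices. Then with probability at least $2/3$, either $\lambda_1 < \epsilon n$, or there exists $x \in \mathrm{span}\{e_i : i\in T\}$ with $x^TAx>0$ and $$\frac{x^TA^2x}{x^TAx}\ge \lambda_1-\epsilon n.$$ *)

(* Defs.v *)
From HB Require Import structures.
From mathcomp Require Import all_boot all_order all_algebra.
From mathcomp Require Import boolp.
From mathcomp Require Import Rstruct.
From Stdlib Require Import Rdefinitions.
Set Implicit Arguments. Unset Strict Implicit. Unset Printing Implicit Defensive.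
Import Order.TTheory GRing.Theory Num.Theory.
Local Open Scope ring_scope.

Definition qform (n : nat) (B : 'M[R]_n) (x : 'cV[R]_n) : R := (x^T *m B *m x) 0 0.

Definition symmetric_mx (n : nat) (A : 'M[R]_n) : Prop := A^T = A.

Definition psd_mx (n : nat) (A : 'M[R]_n) : Prop :=
  forall x : 'cV[R]_n, 0 <= qform A x.

Definition largest_eigenvalue (n : nat) (A : 'M[R]_n) (lam : R) : Prop :=
  eigenvalue A lam /\ forall mu : R, eigenvalue A mu -> mu <= lam.

Definition supported_on (n : nat) (T : {set 'I_n}) (x : 'cV[R]_n) : Prop :=
  forall i : 'I_n, i \notin T -> x i 0 = 0.

(* probability of the event E when each index of [n] is included
   independently with probability p, T = set of included indices *)
Definition bernoulli_prob (n : nat) (p : R) (E : {set 'I_n} -> Prop) : R :=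
  \sum_(T : {set 'I_n} | `[< E T >]) (p ^+ #|T| * (1 - p) ^+ (n - #|T|)).

(* Main.v *)
Require Import Defs.
From HB Require Import structures.
From mathcomp Require Import all_boot all_order all_algebra.
From mathcomp Require Import boolp.
From mathcomp Require Import Rstruct.
From Stdlib Require Import Rdefinitions.
From mathcomp Require Import ring lra.
Import Order.TTheory GRing.Theory Num.Theory.
Local Open Scope ring_scope.

Module Helpers.
Set Implicit Arguments. Unset Strict Implicit. Unset Printing Implicit Defensive.

Section Prob.
Variables (n : nat) (p : R).

Definition wt (T : {set 'I_n}) : R := p ^+ #|T| * (1 - p) ^+ (n - #|T|).

Lemma wt_prod T : wt T = \prod_i (if i \in T then p else 1 - p).
Proof.
rewrite (bigID (mem T)) /=.
rewrite (eq_bigr (fun _ => p)); last by move=> i ->.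
rewrite [X in _ * X](eq_bigr (fun _ => 1 - p)); last by move=> i Hi; rewrite (negbTE Hi).
rewrite !prodr_const /wt; congr (_ * _ ^+ _).
have := cardC (mem T); rewrite card_ord => E.
by rewrite -{1}E addKn.
Qed.

Lemma sum_prod (h : 'I_n -> bool -> R) :
  \sum_(T : {set 'I_n}) \prod_i h i (i \in T) = \prod_i (h i true + h i false).
Proof.
rewrite bigA_distr.
apply: eq_bigr => T _; apply: eq_bigr => i _; by case: (i \in T).
Qed.

Lemma E_prod (g : 'I_n -> bool -> R) :
  \sum_(T : {set 'I_n}) wt T * \prod_i g i (i \in T) =
  \prod_i (p * g i true + (1 - p) * g i false).
Proof.
rewrite -(sum_prod (fun i b => (if b then p else 1 - p) * g i b)); apply: eq_bigr => T _.
by rewrite wt_prod -big_split /=; apply: eq_bigr => i _; case: (i \in T).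
Qed.

Lemma prod_ind (a : 'I_n -> R) i : \prod_k (if k == i then a k else 1) = a i.
Proof.
by rewrite (bigD1 i) //= eqxx big1 ?mulr1 // => k /negbTE ->.
Qed.

Lemma E_one : \sum_(T : {set 'I_n}) wt T = 1.
Proof.
have := E_prod (fun _ _ => 1).
have -> : \prod_(i < n) (p * 1 + (1 - p) * 1) = 1.
  by rewrite big1 // => i _; rewrite !mulr1 subrKC.
by move=> <-; apply: eq_bigr => T _; rewrite big1 ?mulr1.
Qed.

Lemma E_ind1 i : \sum_(T : {set 'I_n}) wt T * (i \in T)%:R = p.
Proof.
have := E_prod (fun k b => if k == i then b%:R else 1).
rewrite (eq_bigr (fun k => if k == i then p else 1)); last first.
  by move=> k _; case: (k == i); rewrite ?mulr1 ?mulr0 ?addr0 ?subrKC.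
rewrite prod_ind => <-; apply: eq_bigr => T _.
by rewrite (prod_ind (fun k => (k \in T)%:R)).
Qed.

Lemma E_ind2 i j : \sum_(T : {set 'I_n}) wt T * ((i \in T)%:R * (j \in T)%:R) =
  p ^+ 2 + (i == j)%:R * (p - p ^+ 2).
Proof.
have [->|neq] := eqVneq i j.
  rewrite mul1r subrKC -(E_ind1 j); apply: eq_bigr => T _.
  by case: (j \in T); rewrite ?mulr1 ?mulr0.
rewrite mul0r addr0.
have := E_prod (fun k b => (if k == i then b%:R else 1) * (if k == j then b%:R else 1)).
rewrite (bigD1 i) //= (bigD1 j) /=; last by rewrite eq_sym neq.
rewrite eqxx (negbTE neq) eq_sym (negbTE neq) eqxx.
set P := (X in _ * (_ * X)).
have -> : P = 1.
  by rewrite /P big1 // => k /andP[/negbTE -> /negbTE ->]; rewrite !mulr1 subrKC.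
rewrite !mulr1 !mul1r !mulr0 !addr0 => H; rewrite expr2 -H; apply: eq_bigr => T _.
by rewrite big_split /= (prod_ind (fun k => (k \in T)%:R)) (prod_ind (fun k => (k \in T)%:R)).
Qed.

Definition Ex (F : {set 'I_n} -> R) := \sum_(T : {set 'I_n}) wt T * F T.

Lemma ExD F G : Ex (fun T => F T + G T) = Ex F + Ex G.
Proof. by rewrite /Ex -big_split; apply: eq_bigr => T _; rewrite mulrDr. Qed.

Lemma ExZ a F : Ex (fun T => a * F T) = a * Ex F.
Proof. by rewrite /Ex mulr_sumr; apply: eq_bigr => T _; rewrite mulrCA. Qed.

Lemma ExC a : Ex (fun _ => a) = a.
Proof. by rewrite /Ex -mulr_suml E_one mul1r. Qed.

Lemma Ex_comb a1 a2 a3 a4 F1 F2 F3 :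
  Ex (fun T => a1 * F1 T + (a2 * F2 T + (a3 + a4 * F3 T))) =
  a1 * Ex F1 + (a2 * Ex F2 + (a3 + a4 * Ex F3)).
Proof.
rewrite (ExD (fun T => a1 * F1 T)) (ExD (fun T => a2 * F2 T)) (ExD (fun _ => a3)).
by rewrite !ExZ ExC.
Qed.

Lemma Ex1 K : Ex (fun T => \sum_i (i \in T)%:R * K i) = p * \sum_i K i.
Proof.
rewrite /Ex (eq_bigr (fun T => \sum_i wt T * (i \in T)%:R * K i)); last first.
  by move=> T _; rewrite mulr_sumr; apply: eq_bigr => i _; rewrite mulrA.
rewrite exchange_big mulr_sumr /=; apply: eq_bigr => i _.
by rewrite -mulr_suml E_ind1.
Qed.

Lemma Ex2 K : Ex (fun T => \sum_i \sum_j (i \in T)%:R * (j \in T)%:R * K i j) =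
  p ^+ 2 * \sum_i \sum_j K i j + (p - p ^+ 2) * \sum_i K i i.
Proof.
rewrite /Ex (eq_bigr (fun T => \sum_i \sum_j wt T * ((i \in T)%:R * (j \in T)%:R) * K i j)); last first.
  move=> T _; rewrite mulr_sumr; apply: eq_bigr => i _.
  by rewrite mulr_sumr; apply: eq_bigr => j _; rewrite mulrA.
rewrite exchange_big /=.
rewrite (eq_bigr (fun i => \sum_j (p ^+ 2 + (i == j)%:R * (p - p ^+ 2)) * K i j)); last first.
  move=> i _; rewrite exchange_big /=; apply: eq_bigr => j _.
  by rewrite -mulr_suml E_ind2.
rewrite !mulr_sumr -big_split /=; apply: eq_bigr => i _.
rewrite (eq_bigr (fun j => p ^+ 2 * K i j + (i == j)%:R * ((p - p ^+ 2) * K i j))); last first.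
  by move=> j _; rewrite mulrDl mulrA.
rewrite big_split /= -mulr_sumr; congr (_ + _).
rewrite (bigD1 i) //= eqxx mul1r big1 ?addr0 // => j.
by rewrite eq_sym => /negbTE ->; rewrite mul0r.
Qed.

Lemma wt_ge0 T : 0 <= p -> p <= 1 -> 0 <= wt T.
Proof. by move=> p0 p1; rewrite /wt mulr_ge0 // exprn_ge0 // subr_ge0. Qed.

Lemma Ex_le F G : 0 <= p -> p <= 1 -> (forall T, F T <= G T) -> Ex F <= Ex G.
Proof.
move=> p0 p1 FG; rewrite /Ex; apply: ler_sum => T _.
by rewrite ler_wpM2l // wt_ge0.
Qed.

End Prob.


Section LA.
Variable n : nat.
Implicit Types (M : 'M[R]_n) (x y z : 'cV[R]_n).

Definition bf M x y : R := (x^T *m M *m y) 0 0.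
Definition vdot x y : R := (x^T *m y) 0 0.

Lemma vdotE x y : vdot x y = \sum_i x i 0 * y i 0.
Proof. by rewrite /vdot mxE; apply: eq_bigr => i _; rewrite mxE. Qed.

Lemma vdotC x y : vdot x y = vdot y x.
Proof. by rewrite !vdotE; apply: eq_bigr => i _; rewrite mulrC. Qed.

Lemma bfE M x y : bf M x y = \sum_i \sum_j x i 0 * M i j * y j 0.
Proof.
rewrite /bf mxE exchange_big /=; apply: eq_bigr => j _.
rewrite mxE mulr_suml; apply: eq_bigr => i _; by rewrite mxE.
Qed.


Lemma bf_sym M x y : M^T = M -> bf M x y = bf M y x.
Proof.
move=> sM; rewrite !bfE exchange_big /=; apply: eq_bigr => j _.
apply: eq_bigr => i _.
have -> : M i j = M j i by rewrite -{1}sM mxE.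
by ring.
Qed.

Lemma bfDl M x y z : bf M (x + y) z = bf M x z + bf M y z.
Proof. by rewrite /bf linearD /= !mulmxDl mxE. Qed.

Lemma bfDr M x y z : bf M x (y + z) = bf M x y + bf M x z.
Proof. by rewrite /bf !mulmxDr mxE. Qed.

Lemma bfZl M a x y : bf M (a *: x) y = a * bf M x y.
Proof. by rewrite /bf linearZ /= -!scalemxAl mxE. Qed.

Lemma bfZr M a x y : bf M x (a *: y) = a * bf M x y.
Proof. by rewrite /bf -!scalemxAr mxE. Qed.

Lemma bf_eig M mu x v : M *m v = mu *: v -> bf M x v = mu * vdot x v.
Proof. by move=> Mv; rewrite /bf -mulmxA Mv -scalemxAr mxE. Qed.

Lemma vdotBl x y z : vdot (x - y) z = vdot x z - vdot y z.
Proof. by rewrite /vdot linearB /= mulmxBl !mxE. Qed.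

Lemma vdotZl a x y : vdot (a *: x) y = a * vdot x y.
Proof. by rewrite /vdot linearZ /= -scalemxAl mxE. Qed.

Lemma bf_expand M y w a :
  bf M (y + a *: w) (y + a *: w) = bf M y y + a * (bf M y w + bf M w y) + a ^+ 2 * bf M w w.
Proof. rewrite bfDl !bfDr !bfZl !bfZr; ring. Qed.

Lemma decomp M mu v x : M^T = M -> M *m v = mu *: v -> vdot v v = 1 ->
  qform M x = qform M (x - vdot x v *: v) + mu * (vdot x v) ^+ 2.
Proof.
move=> sM Mv v1; set a := vdot x v.
set y := x - a *: v.
have hy : bf M y v = 0.
  by rewrite (bf_eig _ Mv) vdotBl vdotZl v1 mulr1 subrr mulr0.
have ex : x = y + a *: v by rewrite /y subrK.
rewrite /qform -/(bf M x x) -/(bf M y y) {1 2}ex.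
clearbody y; rewrite bf_expand hy (bf_sym _ _ sM) hy (bf_eig _ Mv) v1.
ring.
Qed.

Lemma sum_ind (f : 'I_n -> R) i : \sum_k (k == i)%:R * f k = f i.
Proof.
rewrite (bigD1 i) //= eqxx mul1r big1 ?addr0 // => k /negbTE ->; by rewrite mul0r.
Qed.

End LA.

Section Main.
Variables (n : nat) (A : 'M[R]_n) (lam : R) (v : 'cV[R]_n).
Hypotheses (sA : A^T = A) (pA : psd_mx A) (bA : forall i j, `|A i j| <= 1)
  (Av : A *m v = lam *: v) (v1 : vdot v v = 1).

Definition xT (T : {set 'I_n}) : 'cV[R]_n := \col_i ((i \in T)%:R * v i 0).
Definition sT (T : {set 'I_n}) : R := \sum_i (i \in T)%:R * v i 0 ^+ 2.

Lemma vdot_xT T : vdot (xT T) v = sT T.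
Proof. by rewrite vdotE; apply: eq_bigr => i _; rewrite mxE -mulrA expr2. Qed.

Lemma supp_xT T : supported_on T (xT T).
Proof. by move=> i /negbTE Hi; rewrite mxE Hi mul0r. Qed.

Lemma q_sum T : qform A (xT T) =
  \sum_i \sum_j (i \in T)%:R * (j \in T)%:R * (v i 0 * A i j * v j 0).
Proof.
rewrite /qform -/(bf A _ _) bfE; apply: eq_bigr => i _; apply: eq_bigr => j _.
rewrite !mxE; ring.
Qed.

Lemma q_ge T : lam * sT T ^+ 2 <= qform A (xT T).
Proof.
rewrite (decomp (xT T) sA Av v1) vdot_xT lerDr; exact: pA.
Qed.

Lemma sAA : (A *m A)^T = A *m A.
Proof. by rewrite trmx_mul sA. Qed.

Lemma AAv : (A *m A) *m v = lam ^+ 2 *: v.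
Proof. by rewrite -mulmxA Av -scalemxAr Av scalerA expr2. Qed.

Lemma pAA : psd_mx (A *m A).
Proof.
move=> x; rewrite /qform mulmxA -(mulmxA (x^T *m A)).
have -> : x^T *m A = (A *m x)^T by rewrite trmx_mul sA.
rewrite -/(vdot _ _) vdotE; apply: sumr_ge0 => i _; rewrite -expr2; exact: sqr_ge0.
Qed.

Lemma Q_ge T : lam ^+ 2 * sT T ^+ 2 <= qform (A *m A) (xT T).
Proof.
rewrite (decomp (xT T) sAA AAv v1) vdot_xT lerDr; exact: pAA.
Qed.

Lemma lam_sum : \sum_i \sum_j v i 0 * A i j * v j 0 = lam.
Proof. by rewrite -bfE (bf_eig _ Av) v1 mulr1. Qed.

Lemma v_sum : \sum_i v i 0 ^+ 2 = 1.
Proof. by rewrite -v1 vdotE; apply: eq_bigr => i _; rewrite expr2. Qed.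

Lemma Aii_le i : A i i <= 1.
Proof. by apply: le_trans (bA i i); exact: ler_norm. Qed.

Lemma diag_sum_le : \sum_i A i i * v i 0 ^+ 2 <= 1.
Proof.
rewrite -v_sum; apply: ler_sum => i _.
by rewrite ler_piMl ?sqr_ge0 ?Aii_le.
Qed.

Lemma sT1 i : sT [set i] = v i 0 ^+ 2.
Proof.
rewrite /sT (eq_bigr (fun k => (k == i)%:R * v k 0 ^+ 2)) ?sum_ind // => k _.
by rewrite in_set1.
Qed.

Lemma q1 i : qform A (xT [set i]) = v i 0 * A i i * v i 0.
Proof.
rewrite q_sum (eq_bigr (fun k => (k == i)%:R *
   \sum_j (j == i)%:R * (v k 0 * A k j * v j 0))); last first.
  move=> k _; rewrite mulr_sumr; apply: eq_bigr => j _; rewrite !in_set1; ring.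
rewrite sum_ind sum_ind //.
Qed.

Lemma quart_le : lam * \sum_i v i 0 ^+ 4 <= 1.
Proof.
rewrite -v_sum mulr_sumr; apply: ler_sum => i _.
have := q_ge [set i]; rewrite q1 sT1.
have := Aii_le i; have := sqr_ge0 (v i 0).
move: (v i 0) (A i i) => a b h1 h2 h3.
have -> : a ^+ 4 = (a ^+ 2) ^+ 2 by rewrite -exprM.
nra.
Qed.

Lemma event_ok K T : 0 < K -> K <= lam -> 0 < sT T ->
  qform A (xT T) - lam * sT T ^+ 2 <= K * sT T ^+ 2 ->
  exists x, supported_on T x /\ 0 < qform A x /\
    qform (A *m A) x / qform A x >= lam - K.
Proof.
move=> K0 Kl s0 hg; exists (xT T); split; first exact: supp_xT.
have hq := q_ge T; have hQ := Q_ge T.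
have t0 : 0 < sT T ^+ 2 by rewrite exprn_gt0.
move: (qform A (xT T)) (qform (A *m A) (xT T)) (sT T ^+ 2) hq hQ hg t0.
rewrite expr2 => q Q t hq hQ hg t0.
have qp : 0 < q by nra.
split => //; rewrite ler_pdivlMr //; nra.
Qed.

Lemma Ex_ext m p (F G : {set 'I_m} -> R) : (forall T, F T = G T) -> Ex p F = Ex p G.
Proof. by move=> FG; rewrite /Ex; apply: eq_bigr => T _; rewrite FG. Qed.

Lemma sT_sq T : sT T ^+ 2 =
  \sum_i \sum_j (i \in T)%:R * (j \in T)%:R * (v i 0 ^+ 2 * v j 0 ^+ 2).
Proof.
rewrite expr2 {1}/sT mulr_suml; apply: eq_bigr => i _.
rewrite /sT mulr_sumr; apply: eq_bigr => j _; ring.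
Qed.

Section Exp.
Variables (p K : R).
Definition S4 := \sum_i v i 0 ^+ 4.
Definition Dg := \sum_i v i 0 * A i i * v i 0.

Lemma Ex_s : Ex p sT = p.
Proof. by rewrite /sT Ex1 v_sum mulr1. Qed.

Lemma Ex_s2 : Ex p (fun T => sT T ^+ 2) = p ^+ 2 + (p - p ^+ 2) * S4.
Proof.
rewrite (Ex_ext _ sT_sq) Ex2.
have -> : \sum_i \sum_j v i 0 ^+ 2 * v j 0 ^+ 2 = 1.
  rewrite -[RHS](mulr1 1) -{1}v_sum mulr_suml; apply: eq_bigr => i _.
  by rewrite -mulr_sumr v_sum.
rewrite mulr1 /S4; congr (_ + _ * _); apply: eq_bigr => i _; rewrite -exprD //.
Qed.

Lemma Ex_q : Ex p (fun T => qform A (xT T)) = p ^+ 2 * lam + (p - p ^+ 2) * Dg.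
Proof. by rewrite (Ex_ext _ q_sum) Ex2 lam_sum. Qed.

Definition Fb T := 4 / p ^+ 2 * ((sT T - p) ^+ 2 + (qform A (xT T) - lam * sT T ^+ 2) / K).

Lemma Ex_Fb : p != 0 -> K != 0 ->
  Ex p Fb * (p * K) = 4 * (1 - p) * (K * S4 + Dg - lam * S4).
Proof.
move=> p0 K0.
rewrite (Ex_ext _ (G := fun T => (4 / p ^+ 2 * (1 - lam / K)) * sT T ^+ 2 +
   ((4 / p ^+ 2 * (- 2 * p)) * sT T + (4 / p ^+ 2 * p ^+ 2 +
   4 / p ^+ 2 / K * qform A (xT T))))); last first.
  by move=> T; rewrite /Fb; field; rewrite p0 K0.
rewrite Ex_comb Ex_s Ex_s2 Ex_q; field.
by rewrite p0 K0.
Qed.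

Lemma g_ge0 T : 0 <= qform A (xT T) - lam * sT T ^+ 2.
Proof. by rewrite subr_ge0 q_ge. Qed.

Lemma sT_ge0 T : 0 <= sT T.
Proof. by apply: sumr_ge0 => i _; rewrite mulr_ge0 ?ler0n ?sqr_ge0. Qed.

Lemma Fb_ge0 T : 0 < p -> 0 < K -> 0 <= Fb T.
Proof.
move=> p0 K0; rewrite /Fb; apply: mulr_ge0.
  by rewrite divr_ge0 // exprn_ge0 // ltW.
by rewrite addr_ge0 ?sqr_ge0 // divr_ge0 ?g_ge0 ?ltW.
Qed.

Lemma Fb_fail T : 0 < p -> 0 < K ->
  ~ (0 < sT T /\ qform A (xT T) - lam * sT T ^+ 2 <= K * sT T ^+ 2) -> 1 <= Fb T.
Proof.
move=> p0 K0 nE; have gg := g_ge0 T; have sg := sT_ge0 T.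
have p20 : 0 < p ^+ 2 by rewrite exprn_gt0.
rewrite /Fb mulrAC ler_pdivlMr // mul1r.
move: nE gg sg; set g := qform A (xT T) - lam * sT T ^+ 2; set s := sT T => nE gg sg.
have gK : 0 <= g / K by rewrite divr_ge0 // ltW.
have [sle|sgt] := lerP s (p / 2).
  have h : p / 2 <= p - s by lra.
  have -> : (s - p) ^+ 2 = (p - s) * (p - s) by rewrite -expr2 -sqrrN opprB.
  rewrite expr2; nra.
have s0 : 0 < s by lra.
have gt : K * s ^+ 2 < g by rewrite ltNge; apply/negP => H; apply: nE.
have : s ^+ 2 <= g / K by rewrite ler_pdivlMr // mulrC ltW.
have h3 : p / 2 <= s by lra.
move: gK; rewrite !expr2 => gK h5.
have : 0 <= (s - p) * (s - p) by rewrite -expr2 sqr_ge0.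
nra.
Qed.

Lemma Dg_le : Dg <= 1.
Proof.
apply: le_trans diag_sum_le; rewrite le_eqVlt; apply/orP; left; apply/eqP.
by apply: eq_bigr => i _; ring.
Qed.

Lemma S4_ge0 : 0 <= S4.
Proof. rewrite /S4; apply: sumr_ge0 => i _; rewrite (_ : v i 0 ^+ 4 = (v i 0 ^+ 2) ^+ 2) ?sqr_ge0 // -exprM //. Qed.

Lemma Ex_Fb_le : 0 < p -> p <= 1 -> 0 < K -> K <= lam -> 24 * (1 - p) <= p * K ->
  Ex p Fb <= 1 / 6.
Proof.
move=> p0 p1 K0 Kl h.
have e := Ex_Fb (lt0r_neq0 p0) (lt0r_neq0 K0).
have pK : 0 < p * K by rewrite mulr_gt0.
have d := Dg_le; have s4 := S4_ge0.
rewrite -(ler_pM2r pK); rewrite e.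
move: (S4) (Dg) s4 d => S D s4 d.
have h1 : (K - lam) * S <= 0 by nra.
nra.
Qed.

End Exp.

End Main.

End Helpers.
Import Helpers.

Lemma all_true n (p : R) (P : {set 'I_n} -> Prop) :
  (forall T, P T) -> bernoulli_prob p P = 1.
Proof.
move=> HP; rewrite /bernoulli_prob (eq_bigl (fun _ => true)); last first.
  by move=> T; apply/asboolP.
exact: (E_one n p).
Qed.

Lemma final_step n (p : R) (P : {set 'I_n} -> Prop) (F : {set 'I_n} -> R) :
  0 <= p -> p <= 1 -> (forall T, 0 <= F T) -> (forall T, ~ P T -> 1 <= F T) ->
  Ex p F <= 1 / 6 -> 2 / 3 <= bernoulli_prob p P.
Proof.
move=> p0 p1 F0 F1 EF; rewrite /bernoulli_prob.
rewrite (eq_bigr (fun T => wt p T)) //.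
have tot := E_one n p.
rewrite (bigID (fun T => `[< P T >])) /= in tot.
have hfail : \sum_(T | ~~ `[< P T >]) wt p T <= 1 / 6.
  apply: le_trans EF.
  rewrite /Ex [X in _ <= X](bigID (fun T => `[< P T >])) /=.
  apply: le_trans (_ : _ <= \sum_(T | ~~ `[< P T >]) wt p T * F T) _.
    apply: ler_sum => T /asboolPn nE.
    by rewrite -{1}(mulr1 (wt p T)) ler_wpM2l ?wt_ge0 ?F1.
  rewrite lerDr; apply: sumr_ge0 => T _.
  by rewrite mulr_ge0 ?wt_ge0.
lra.
Qed.

Theorem mainTheorem5 :
  exists c : R, 0 < c /\
  forall (n : nat) (eps : R) (A : 'M[R]_n) (lam1 : R),
    0 < eps -> eps < 1 ->
    symmetric_mx A -> psd_mx A ->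
    (forall i j, `|A i j| <= 1) ->
    largest_eigenvalue A lam1 ->
    let p := Num.min 1 (c / (eps * n%:R)) in
    2 / 3 <= bernoulli_prob p (fun T =>
      lam1 < eps * n%:R \/
      exists x : 'cV[R]_n, supported_on T x /\ 0 < qform A x /\
        qform (A *m A) x / qform A x >= lam1 - eps * n%:R).
Proof.
exists 24; split; first lra.
move=> n eps A lam1 e0 e1 sA pA bA [ev _]; cbv zeta; set p := Num.min 1 _.
case/eigenvalueP: ev => w wA w0.
set u := w^T.
have Au : A *m u = lam1 *: u by rewrite /u -{1}sA -trmx_mul wA linearZ.
have u0 : u != 0.
  apply: contraNneq w0 => H; by rewrite -(trmxK w) -/u H linear0.
set N := vdot u u.
have N0 : 0 < N.
  have Nge : 0 <= N by rewrite /N vdotE; apply: sumr_ge0 => i _; rewrite -expr2 sqr_ge0.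
  rewrite lt_def Nge andbT; apply/eqP => H0; move/eqP: u0; apply.
  apply/matrixP => i j; rewrite ord1 mxE.
  move: H0; rewrite /N vdotE => H0.
  have := psumr_eq0P (P := predT) (fun i (_ : true) => (ltac:(by rewrite -expr2 sqr_ge0) : 0 <= u i 0 * u i 0)) H0 (i:=i) isT.
  move/eqP; rewrite mulf_eq0 orbb /u mxE => /eqP ->; by rewrite mxE.
set v := (Num.sqrt N)^-1 *: u.
have sN : 0 < Num.sqrt N by rewrite sqrtr_gt0.
have Av : A *m v = lam1 *: v by rewrite /v -scalemxAr Au !scalerA mulrC.
have v1 : vdot v v = 1.
  rewrite /v vdotZl vdotC vdotZl -/N -{3}(sqr_sqrtr (ltW N0)).
  by field; rewrite gt_eqF.
case: (ltP lam1 (eps * n%:R)) => hl.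
  by rewrite all_true; [lra | move=> T; left].
set K := eps * n%:R in hl p *.
have n0 : leq 1 n.
  rewrite lt0n; apply/negP => /eqP n0.
  move: v1; rewrite vdotE big1; first by move/eqP; rewrite eq_sym oner_eq0.
  by move=> i _; have := ltn_ord i; rewrite {2}n0.
have K0 : 0 < K by rewrite /K mulr_gt0 // ltr0n.
have p0 : 0 < p by rewrite /p lt_min ltr01 /= divr_gt0.
have p1 : p <= 1 by rewrite /p ge_min lexx.
have h24 : 24 * (1 - p) <= p * K.
  rewrite /p minEle; case: ifP => h; first by rewrite subrr mulr0 mul1r ltW.
  have KK : 24 / K * K = 24 by rewrite divfK ?gt_eqF.
  rewrite KK.
  have : 0 < 24 / K by rewrite divr_gt0.
  move: (24 / K) => t t0; lra.
apply: (@final_step n p _ (Fb A lam1 v p K)).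
- exact: ltW.
- exact: p1.
- by move=> T; apply: (Fb_ge0 sA pA Av v1).
- move=> T nE; apply: (Fb_fail sA pA Av v1) => // -[s0 hg]; apply: nE; right.
  exact: (event_ok sA pA Av v1).
- exact: (Ex_Fb_le bA Av v1 p0 p1 K0 hl h24).
Qed.
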